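(* Let $q$ be a power of $2$, $c\in\mathbb{F}_q^*$, and $f(X)=X(X^{q-1}-c)^{q+1}$ as a map $\mathbb{F}_{q^2}\to\mathbb{F}_{q^2}$. Let $\mathrm{Fix}(f)=\{\alpha\in\mathbb{F}_{q^2}:f(\alpha)=\alpha\}$. Then $|\mathrm{Fix}(f)|=2q-1$ if $\operatorname{Tr}(1/c)=1$, and $|\mathrm{Fix}(f)|=1$ if $\operatorname{Tr}(1/c)=0$.
   Context: $\operatorname{Tr}:\mathbb{F}_q\to\mathbb{F}_2$ denotes the absolute trace function. *)

(* Defs.v *)
From HB Require Import structures.
From mathcomp Require Import all_boot all_order all_algebra all_field.
Set Implicit Arguments. Unset Strict Implicit. Unset Printing Implicit Defensive.
Import GRing.Theory.
Local Open Scope ring_scope.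

(* Absolute trace F_q -> F_2 with q = 2^k, for x in the subfield F_q of a
   field L of characteristic 2: Tr(x) = x + x^2 + x^4 + ... + x^(2^(k-1)). *)
Definition absTr (L : fieldType) (k : nat) (x : L) : L :=
  \sum_(i < k) x ^+ (2 ^ i)%N.

Definition fmap (L : fieldType) (q : nat) (c : L) (x : L) : L :=
  x * (x ^+ q.-1 - c) ^+ q.+1.

Definition Fix (L : finFieldType) (q : nat) (c : L) : {set L} :=
  [set a : L | fmap q c a == a].

(* Main.v *)
Require Import Defs.
From HB Require Import structures.
From mathcomp Require Import all_boot all_order all_algebra all_field.
From mathcomp Require Import ring zify.
Import GRing.Theory.
Local Open Scope ring_scope.

Section Aux.
Variable R : comNzRingType.
Hypothesis two0 : (2:R) = 0.

Lemma sq_add (x y : R) : (x + y)^+2 = x^+2 + y^+2.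
Proof. ring: two0. Qed.

Lemma sq_sum n (F : 'I_n -> R) : (\sum_(i < n) F i)^+2 = \sum_(i < n) (F i)^+2.
Proof.
elim: n F => [|n IH] F; first by rewrite !big_ord0 expr2 mulr0.
by rewrite !big_ord_recr /= sq_add IH.
Qed.

Lemma pow2_add i (x y : R) : (x + y)^+(2^i) = x^+(2^i) + y^+(2^i).
Proof.
elim: i => [|i IH]; first by rewrite expn0 !expr1.
by rewrite expnS mulnC !exprM IH sq_add.
Qed.

Lemma tele (m z a : R) : (exists u, z^+2 + z + a = u * m) ->
  forall i, exists u, z^+(2^i) + z + \sum_(j < i) a^+(2^j) = u * m.
Proof.
case=> v hv; elim=> [|i [u hu]].
  exists 0; rewrite big_ord0 expn0 expr1 mul0r; ring: two0.
exists (v + u^+2 * m).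
rewrite big_ord_recl /= expn0 expr1.
have -> : \sum_(j < i) a ^+ (2 ^ (lift ord0 j)) = (\sum_(j < i) a^+(2^j))^+2.
  rewrite sq_sum; apply: eq_bigr => j _.
  by rewrite -exprM lift0 expnS mulnC.
set s := (\sum_(j < i) a ^+ (2 ^ j)) in hu *; clearbody s.
have -> : z ^+ (2 ^ i.+1) = (z^+(2^i))^+2 by rewrite expnS mulnC exprM.
have hu' : z^+(2^i) = u * m - z - s by rewrite -hu; ring.
have hv' : z^+2 = v * m - z - a by rewrite -hv; ring.
rewrite hu'.
have -> : (u * m - z - s) ^+ 2 = u^+2 * m^+2 + z^+2 + s^+2 + 2 * (z * s - u * m * z - u * m * s) by ring.
rewrite two0 mul0r addr0 hv'.
have -> : u ^+ 2 * m ^+ 2 + (v * m - z - a) + s ^+ 2 + z + (a + s ^+ 2) = (v + u ^+ 2 * m) * m + 2 * s^+2 by ring.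
by rewrite two0 mul0r addr0.
Qed.

End Aux.

Lemma trsq (L : fieldType) k (b : L) : (0 < k)%N -> b^+(2^k) = b ->
  absTr k (b^+2) = absTr k b.
Proof.
case: k => // k _ hb; rewrite /absTr big_ord_recr big_ord_recl /=.
rewrite -exprM mulnC -expnSr hb addrC expn0 expr1; congr (_ + _).
by apply: eq_bigr => j _; rewrite -exprM /bump /= add1n expnS.
Qed.

Lemma card_roots_lt (F : finFieldType) (p : {poly F}) : p != 0 ->
  (#|[set x | root p x]| < size p)%N.
Proof.
move=> p0; rewrite cardE; apply: max_poly_roots => //.
  by apply/allP => x; rewrite mem_enum inE.
exact: enum_uniq.
Qed.

Lemma fix_iff (L : fieldType) (q : nat) (c x : L) : (2:L) = 0 -> c != 0 ->
  x != 0 -> (x^+q.-1)^+q.+1 = 1 -> c^+q = c ->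
  (q = 2 ^ (logn 2 q))%N ->
  (fmap q c x == x) = ((x^+q.-1)^+2 + c * x^+q.-1 + 1 == 0).
Proof.
move=> two0 c0 x0 hx1 hcq hq.
rewrite /fmap; set y := x^+q.-1 in hx1 *.
have hyq : y^+q * y = 1 by rewrite -exprSr.
rewrite -{2}[x]mulr1 (inj_eq (mulfI x0)).
have opp : forall t : L, - t = t.
  by move=> t; apply/eqP; rewrite -subr_eq0 -opprD -mulr2n -mulr_natr two0 mulr0 oppr0.
rewrite -[c]opp opprK exprSr hq pow2_add // -hq hcq.
have E : (y ^+ q + c) * (y + c) = y^+q * y + c * (y^+q + y + c) by ring.
rewrite E hyq -subr_eq0 addrC addKr mulf_eq0 (negbTE c0) /=.
rewrite opp; apply/eqP/eqP => h.
  have -> : y ^+ 2 + c * y + 1 = y * (y ^+ q + y + c) + (1 - y^+q * y) by ring.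
  by rewrite h hyq subrr mulr0 addr0.
have -> : y ^+ q + y + c = y^+q * (y ^+ 2 + c * y + 1) + (1 - y^+q * y) * (y + c) by ring.
by rewrite h hyq subrr mulr0 mul0r addr0.
Qed.

Theorem mainTheorem7 (k : nat) (L : finFieldType) (c : L) :
  (0 < k)%N -> #|L| = ((2 ^ k) ^ 2)%N ->
  c ^+ (2 ^ k) = c -> c != 0 ->
  (absTr k c^-1 = 1 -> #|Fix (2 ^ k) c| = (2 * 2 ^ k - 1)%N) /\
  (absTr k c^-1 = 0 -> #|Fix (2 ^ k) c| = 1%N).
Proof.
move=> k0 hL hcq c0.
have ch2 : (2%N \in [char L]).
  by apply: (card_finPcharP (n := (k * 2)%N)) => //; rewrite hL expnM.
have two0 : (2:L) = 0 := pcharf0 ch2.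
have hqlog : (2 ^ k = 2 ^ logn 2 (2 ^ k))%N by rewrite pfactorK.
have q2 : (2 <= 2 ^ k)%N by rewrite -[X in (X <= _)%N]expn1 leq_exp2l.
set q := (2 ^ k)%N in hL hcq hqlog q2 *.
set n := #|L| in hL.
have qn : (q.-1 * q.+1 = n.-1)%N.
  rewrite hL -mulnn; case: (q) q2 => [|q'] //= _; nia.
have xn1 : forall x : L, x != 0 -> x ^+ n.-1 = 1.
  move=> x x0; have := expf_card x; rewrite -/n.
  have n0 : (0 < n)%N by rewrite hL -mulnn muln_gt0 andbb; lia.
  rewrite -[n in x ^+ n](prednK n0) exprS => h.
  by apply: (mulfI x0); rewrite mulr1.
have hx1 : forall x : L, x != 0 -> (x^+q.-1)^+q.+1 = 1.
  by move=> x x0; rewrite -exprM qn xn1.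
pose m : {poly L} := ('X^(q.-1))^+2 + c%:P * 'X^(q.-1) + 1.
have memFix : forall x, (x \in Fix q c) = (x == 0) || root m x.
  move=> x; rewrite inE; have [->|x0] := eqVneq x 0.
    by rewrite /fmap mul0r eqxx.
  by rewrite /= fix_iff ?hx1 // /root /m !hornerE.
pose b := c^-1.
have hbc : b * c = 1 by rewrite mulVf.
have hb : b ^+ q = b by rewrite /b exprVn hcq.
split => hTr; last first.
suff -> : Fix q c = [set 0] by rewrite cards1.
apply/setP => x; rewrite memFix inE; have [//|x0 /=] := eqVneq x 0.
apply/negbTE/negP => rx.
move: rx; rewrite /root /m !hornerE; set y := x ^+ q.-1 => /eqP s0.
have hyq : y^+q * y = 1 by rewrite -exprSr hx1.
have t0 : y ^+ q + y + c = 0.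
  have -> : y ^+ q + y + c = y^+q * (y ^+ 2 + c * y + 1) + (1 - y^+q * y) * (y + c) by ring.
  by rewrite s0 hyq subrr mulr0 mul0r addr0.
have hz : exists u : L, (b * y)^+2 + b * y + b^+2 = u * 0.
  exists 0; rewrite mulr0.
  have -> : (b * y)^+2 + b * y + b^+2 = b^+2 * (y ^+ 2 + c * y + 1) + b * y * (1 - b * c) by ring.
  by rewrite s0 hbc subrr !mulr0 addr0.
have [u hu] := @tele _ two0 _ _ _ hz k.
rewrite -/(absTr k (b^+2)) trsq // hTr addr0 mulr0 -/q exprMn hb in hu.
have : b * c = 0.
  have -> : b * c = b * (y ^+ q + y + c) - (b * y ^+ q + b * y) by ring.
  by rewrite t0 hu mulr0 subrr.
by rewrite hbc => /eqP; rewrite oner_eq0.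
pose Y : {poly L} := 'X^(q.-1).
pose B : {poly L} := b%:P.
pose C : {poly L} := c%:P.
have hBC : B * C = 1 by rewrite -polyCM hbc.
have two0P : (2 : {poly L}) = 0 by have := rmorph_nat (@polyC L) 2; move=> <-; rewrite two0 raddf0.
have hz : exists u, (B * Y)^+2 + B * Y + B^+2 = u * m.
  exists (B^+2).
  have -> : (B * Y)^+2 + B * Y + B^+2 = B^+2 * m + B * Y * (1 - B * C) by rewrite /m /B /C /Y; ring.
  by rewrite hBC subrr mulr0 addr0.
have [u hu] := @tele _ two0P _ _ _ hz k.
have hsum : \sum_(j < k) (B^+2)^+(2^j) = 1.
  under eq_bigr => j _ do rewrite /B -!rmorphXn.
  by rewrite -rmorph_sum -/(absTr k (b^+2)) trsq // hTr.
have hu' : B * Y ^+ q + B * Y + 1 = u * m.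
  rewrite -hu hsum exprMn; congr (_ * _ + _ + _).
  by rewrite /B -rmorphXn hb.
have hS : 'X^(n.-1) - 1 = (Y * C * u - 1) * m.
  have -> : 'X^(n.-1) = Y ^+ q * Y by rewrite -exprSr /Y -exprM qn.
  have -> : Y ^+ q * Y - 1 = Y * C * (B * Y ^+ q + B * Y + 1) - m + (Y ^+ q * Y + Y ^+ 2) * (1 - B * C).
    by rewrite /m /C /Y; ring.
  by rewrite hBC subrr mulr0 addr0 hu'; ring.
set S := Y * C * u - 1 in hS.
have n0 : (1 < n.-1)%N by rewrite hL -mulnn; nia.
have hsz : size ('X^(n.-1) - 1 : {poly L}) = n.
  rewrite size_Xn_sub_1; last lia.
  by rewrite prednK //; lia.
have S0 : S != 0.
  by apply/eqP => S0; move: hsz; rewrite hS S0 mul0r size_poly0; lia.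
have m0 : m != 0.
  by apply/eqP => m0; move: hsz; rewrite hS m0 mulr0 size_poly0; lia.
have szY2 : size (('X^(q.-1))^+2 : {poly L}) = (2 * q.-1).+1.
  by rewrite -exprM size_polyXn mulnC.
have qp : (q.-1).+1 = q by rewrite prednK //; apply: ltnW.
have szr : (size (c%:P * 'X^(q.-1) + 1 : {poly L})%R <= q)%N.
  apply: (leq_trans (size_add _ _)); rewrite geq_max size_poly1 mul_polyC.
  rewrite (leq_trans (size_scale_leq _ _)) ?size_polyXn ?qp //.
  by apply: ltnW.
have szm : size m = (2 * q.-1).+1.
  rewrite /m -addrA size_addl szY2 //.
  apply: (leq_ltn_trans szr).
  have aux : forall r, (1 < r)%N -> (r < (2*r.-1).+1)%N by move=> r; lia.
  exact: aux q2.
have hSm : size ('X^(n.-1) - 1 : {poly L}) = (size S + size m).-1 by rewrite hS size_mul.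
have sub : [set~ (0:L)] \subset [set x | root S x] :|: [set x | root m x].
  apply/subsetP => x; rewrite !inE => x0.
  have : root ('X^(n.-1) - 1) x by rewrite /root !hornerE xn1 ?subrr.
  by rewrite hS rootM.
have := subset_leq_card sub; rewrite cardsC1 cardsU -/n => hcnt.
have := @card_roots_lt _ _ S0; have := @card_roots_lt _ _ m0 => hm hS'.
have -> : Fix q c = 0 |: [set x | root m x].
  by apply/setP => x; rewrite memFix !inE.
rewrite cardsU1 inE.
have -> : root m 0 = false.
  rewrite /root /m !hornerE expr0n.
  have -> : (q.-1 == 0)%N = false by lia.
  by rewrite expr0n /= mulr0 !add0r oner_eq0.
have aux2 : forall n q a b d sS sm : nat, (1 < q)%N -> n = (q ^ 2)%N ->
    (n.-1 <= a + b - d)%N -> (b < sm)%N -> (a < sS)%N -> n = (sS + sm).-1 ->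
    sm = (2 * q.-1).+1 -> (1 + b = 2 * q - 1)%N.
  move=> n1 q1 a1 b1 d1 sS1 sm1 h1; rewrite -mulnn => h2 h3 h4 h5 h6 h7; nia.
rewrite /=; apply: (aux2 n q _ _ _ (size S) (size m) q2 hL hcnt hm hS' _ szm).
by rewrite -hsz hSm.
Qed.
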